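(* Let $G$ be a finite group and let $p$ be a fixed prime divisor of $|G|$. Suppose that every maximal subgroup of $G$ is nilpotent or has order not divisible by $p$. Then for each prime divisor $q$ of $|G|$, $G$ is $q$-nilpotent or $q$-closed.
   Context: For a prime $q$, a finite group $G$ is $q$-nilpotent if it has a normal $q$-complement (a normal subgroup of order coprime to $q$ and index a power of $q$), and $q$-closed if its Sylow $q$-subgroup is normal in $G$. *)

(* Defs.v *)
From mathcomp Require Import all_boot all_fingroup all_solvable.
Set Implicit Arguments. Unset Strict Implicit. Unset Printing Implicit Defensive.
Local Open Scope group_scope.

Definition q_nilpotent (gT : finGroupType) (q : nat) (G : {set gT}) : Prop :=
  exists K : {group gT}, [/\ K <| G, coprime #|K| q & q.-nat #|G : K|].

Definition q_closed (gT : finGroupType) (q : nat) (G : {set gT}) : Prop :=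
  exists P : {group gT}, P \in 'Syl_q(G) /\ P <| G.

(* Main.v *)
Require Import Defs.
From mathcomp Require Import all_boot all_fingroup all_solvable.
From mathcomp Require Import zify.
From mathcomp Require vcharacter.
Local Open Scope group_scope.
Set Implicit Arguments. Unset Strict Implicit. Unset Printing Implicit Defensive.

Definition star (gT : finGroupType) (p : nat) (G : {group gT}) :=
  forall H : {group gT}, H \proper G -> nilpotent H \/ ~~ (p %| #|H|).

Lemma star_nil (gT : finGroupType) (p : nat) (G H : {group gT}) :
  star p G -> H \proper G -> p %| #|H| -> nilpotent H.
Proof. by move=> st pHG dH; case: (st H pHG) => // /negP. Qed.

Lemma star_quo (gT : finGroupType) (p : nat) (G M : {group gT}) :
  star p G -> M <| G -> star p (G / M).
Proof.
move=> st nMG Hb prH.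
pose H := (coset M @*^-1 Hb)%G.
have HbE : H / M = Hb by rewrite cosetpreK.
have prHG : H \proper G.
  rewrite -(quotientGK nMG) /proper /= !cosetpreSK.
  by rewrite /proper in prH.
case: (st H prHG) => [nH | ndH].
  by left; rewrite -HbE quotient_nil.
right; apply: contra ndH => dH.
by rewrite card_cosetpre dvdn_mull.
Qed.

Lemma p_dvd_nontriv (gT : finGroupType) (p : nat) (P : {group gT}) :
  p.-group P -> P :!=: 1 -> p %| #|P|.
Proof. by move=> pP ntP; case: (pgroup_pdiv pP ntP). Qed.

Lemma index_pre (gT : finGroupType) (G M : {group gT}) (Kb : {group coset_of M}) :
  M <| G -> Kb \subset G / M -> #|G : coset M @*^-1 Kb| = #|G / M : Kb|.
Proof.
move=> nMG sKG.
have sKG' : coset M @*^-1 Kb \subset G.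
  by rewrite -(quotientGK nMG) cosetpreSK.
rewrite -(divgS sKG') -(divgS sKG) card_cosetpre.
rewrite -{1}(quotientGK nMG) card_cosetpre divnMl //.
Qed.


Lemma syl_TI (gT : finGroupType) (p : nat) (G : {group gT}) :
  prime p -> star p G -> 'O_p(G) = 1 ->
  forall P1 P2 : {group gT}, p.-Sylow(G) P1 -> p.-Sylow(G) P2 -> P1 != P2 ->
  P1 :&: P2 = 1.
Proof.
move=> pr st Op1.
suff main : forall k (P1 P2 : {group gT}), #|G| - #|P1 :&: P2| < k ->
  p.-Sylow(G) P1 -> p.-Sylow(G) P2 -> P1 != P2 -> P1 :&: P2 = 1.
  by move=> P1 P2; apply: (main (#|G| - #|P1 :&: P2|).+1).
elim=> [//|k IH] P1 P2 lt sy1 sy2 ne12.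
apply/eqP; apply/negPn/negP => ntD.
set D := (P1 :&: P2)%G.
have sP1G := pHall_sub sy1; have sP2G := pHall_sub sy2.
have pP1 := pHall_pgroup sy1; have pP2 := pHall_pgroup sy2.
have pD : p.-group D by apply: pgroupS pP1; apply: subsetIl.
have prD1 : D \proper P1.
  rewrite properEneq subsetIl andbT; apply: contra ne12 => /eqP eD.
  have s12 : P1 \subset P2 by rewrite -eD subsetIr.
  apply/eqP; apply: val_inj => /=; apply/eqP.
  by rewrite eqEcard s12 (card_Hall sy1) (card_Hall sy2) leqnn.
have prD2 : D \proper P2.
  rewrite properEneq subsetIr andbT; apply: contra ne12 => /eqP eD.
  have s21 : P2 \subset P1 by rewrite -eD subsetIl.
  apply/eqP; apply: val_inj => /=; apply/eqP.
  by rewrite eq_sym eqEcard s21 (card_Hall sy1) (card_Hall sy2) leqnn.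
have nD1 := nilpotent_proper_norm (pgroup_nil pP1) prD1.
have nD2 := nilpotent_proper_norm (pgroup_nil pP2) prD2.
have sDG : D \subset G by apply: subset_trans sP1G; apply: subsetIl.
have nnD : ~~ (D <| G).
  apply: contra ntD => nDG; rewrite -subG1 -Op1; exact: pcore_max.
have prN : 'N_G(D) \proper G.
  rewrite properEneq subsetIl andbT; apply: contra nnD => /eqP eN.
  by rewrite /normal sDG /= -eN subsetIr.
have dN : p %| #|'N_G(D)|.
  apply: dvdn_trans (p_dvd_nontriv pD ntD) _; apply: cardSg.
  by rewrite subsetI sDG normG.
have nilN := star_nil st prN dN.
have hallS := nilpotent_pcore_Hall p nilN.
have sNS : forall Pi : {group gT}, Pi \subset G -> p.-group Pi ->
    'N_Pi(D) \subset 'O_p('N_G(D)).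
  move=> Pi sPiG pPi; rewrite (sub_Hall_pcore hallS).
    by apply: pgroupS pPi; apply: subsetIl.
  by apply: setSI.
have [P3 sy3 sSP3] := Sylow_superset (subset_trans (pcore_sub _ _) (subsetIl G _)) (pcore_pgroup p 'N_G(D)).
have key : forall Pi : {group gT}, p.-Sylow(G) Pi -> D \proper 'N_Pi(D) ->
    #|G| - #|D| <= k -> 'N_Pi(D) \subset Pi -> P3 = Pi.
  move=> Pi syi prDi lek sNi.
  have sNP3 : 'N_Pi(D) \subset P3 :&: Pi.
    rewrite subsetI sNi andbT; apply: subset_trans sSP3.
    exact: sNS (pHall_sub syi) (pHall_pgroup syi).
  apply/eqP; apply/negPn/negP => ne3.
  have ltc : #|D| < #|P3 :&: Pi| := leq_trans (proper_card prDi) (subset_leq_card sNP3).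
  have leG : #|P3 :&: Pi| <= #|G|.
    by apply: subset_leq_card; apply: subset_trans (pHall_sub syi); apply: subsetIr.
  have mlt : #|G| - #|P3 :&: Pi| < k.
    move: lek ltc leG; clear; lia.
  have := IH P3 Pi mlt.
  move=> /(_ sy3 syi ne3) e1.
  move: ltc; rewrite e1 cards1 ltnS leqn0 cards_eq0 => /eqP D0.
  by move: (group1 D); rewrite D0 inE.
have lek : #|G| - #|D| <= k by [].
have e1 := key P1 sy1 nD1 lek (subsetIl _ _).
have e2 := key P2 sy2 nD2 lek (subsetIl _ _).
by move: ne12; rewrite -e1 -e2 eqxx.
Qed.


Lemma base_case (gT : finGroupType) (p : nat) (G P : {group gT}) :
  prime p -> star p G -> p.-Sylow(G) P -> ~~ (P <| G) ->
  'O_p(G) = 1 -> 'O_p^'(G) = 1 -> False.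
Proof.
move=> pr st syP nnP Op1 Op'1.
have sPG := pHall_sub syP; have pP := pHall_pgroup syP.
set N := 'N_G(P)%G.
have sNG : N \subset G by apply: subsetIl.
have sPN : P \subset N by rewrite subsetI sPG normG.
have prN : N \proper G.
  rewrite properEneq sNG andbT; apply: contra nnP => /eqP eN.
  by rewrite /normal sPG /= -eN subsetIr.
have ntP : P :!=: 1.
  by apply: contra nnP => /eqP ->; apply: normal1.
have dP := p_dvd_nontriv pP ntP.
have nilN : nilpotent N := star_nil st prN (dvdn_trans dP (cardSg sPN)).
have syPN : p.-Sylow(N) P := pHall_subl sPN sNG syP.
have OpN : 'O_p(N) = P by rewrite -(nilpotent_Hall_pcore nilN syPN).
have cPN' : 'O_p^'(N) \subset 'C(P).
  have [_ _ cc _] := dprodP (nilpotent_pcoreC p nilN).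
  by move: cc; rewrite OpN.
have TI : forall g, g \in G -> g \notin N -> N :&: N :^ g = 1.
  move=> g Gg nNg.
  have nePg : P :^ g != P.
    apply: contra nNg => /eqP ePg; by rewrite inE Gg; apply/normP.
  have tiP : P :&: P :^ g = 1.
    apply: (syl_TI pr st Op1 syP); first by rewrite pHallJ.
    by rewrite eq_sym.
  set X := (N :&: N :^ g)%G.
  have nilX : nilpotent X by apply: nilpotentS nilN; apply: subsetIl.
  have sXN : X \subset N := subsetIl _ _.
  have sXNg : X \subset N :^ g := subsetIr _ _.
  have nilNg : nilpotent (N :^ g)%G by rewrite /= -(isog_nil (conj_isog _ _)).
  have Op_X : 'O_p(X) = 1.
    apply/trivgP; rewrite -tiP subsetI; apply/andP; split.
      rewrite -OpN (sub_Hall_pcore (nilpotent_pcore_Hall p nilN)) ?pcore_pgroup //.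
      exact: subset_trans (pcore_sub _ _) sXN.
    rewrite -OpN -pcoreJ (sub_Hall_pcore (nilpotent_pcore_Hall p nilNg)) ?pcore_pgroup //.
    exact: subset_trans (pcore_sub _ _) sXNg.
  set B := 'O_p^'(X)%G.
  have sBN : B \subset 'O_p^'(N).
    rewrite (sub_Hall_pcore (nilpotent_pcore_Hall _ nilN)) ?pcore_pgroup //.
    exact: subset_trans (pcore_sub _ _) sXN.
  have sBNg : B \subset 'O_p^'(N) :^ g.
    rewrite -pcoreJ (sub_Hall_pcore (nilpotent_pcore_Hall _ nilNg)) ?pcore_pgroup //.
    exact: subset_trans (pcore_sub _ _) sXNg.
  have cBP : P \subset 'C(B) by rewrite centsC; apply: subset_trans sBN cPN'.
  have cBPg : P :^ g \subset 'C(B).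
    by rewrite centsC; apply: subset_trans sBNg _; rewrite centJ conjSg.
  have sBG : B \subset G.
    by apply: subset_trans sNG; apply: subset_trans sXN; apply: pcore_sub.
  have CG : 'C_G(B) = G.
    apply/eqP; apply/negPn/negP => neC.
    have prC : 'C_G(B) \proper G by rewrite properEneq neC subsetIl.
    have sPC : P \subset 'C_G(B) by rewrite subsetI sPG.
    have sPgC : P :^ g \subset 'C_G(B).
      by rewrite subsetI cBPg andbT -(conjGid Gg) conjSg.
    have nilC := star_nil st prC (dvdn_trans dP (cardSg sPC)).
    have e1 := nilpotent_Hall_pcore nilC (pHall_subl sPC (subsetIl _ _) syP).
    have syPg : p.-Sylow(G) (P :^ g) by rewrite pHallJ.
    have e2 := nilpotent_Hall_pcore nilC (pHall_subl sPgC (subsetIl _ _) syPg).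
    by move: nePg; rewrite e2 -e1 eqxx.
  have nBG : B <| G.
    rewrite /normal sBG /=; apply: subset_trans (cent_sub B).
    by rewrite -CG subsetIr.
  have B1 : B :=: 1.
    apply/trivgP; rewrite -Op'1; apply: pcore_max => //; exact: pcore_pgroup.
  have := nilpotent_pcoreC p nilX; move/dprodW.
  by rewrite Op_X B1 mulg1 => <-.
have frobG : [Frobenius G with complement N].
  rewrite /Frobenius_group_with_complement; apply/andP; split; first by rewrite proper_neq.
  apply/normedTI_memJ_P; split => //.
    rewrite setD_eq0 subG1; apply: contra ntP => /eqP N1.
    by rewrite -subG1 -N1.
  move=> a g /setD1P[nta Na] Gg.
  case Ng: (g \in N).
    by apply/setD1P; split; [rewrite conjg_eq1 | rewrite groupJ].
  apply/negP => /setD1P[ntag Nag].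
  have : a ^ g \in N :&: N :^ g by rewrite inE Nag memJ_conjg.
  by rewrite TI ?Ng // inE (negPf ntag).
have [K frobK] := vcharacter.Frobenius_kernel_exists frobG.
have [defG ntK _ _ _] := Frobenius_context frobK.
have [nKG _ _ _ _] := sdprod_context defG.
have cop := Frobenius_coprime frobK.
have p'K : p^'.-group K.
  rewrite /pgroup p'natE //; apply/negP => dK.
  have := cop; rewrite /coprime => /eqP g1.
  have : p %| gcdn #|K| #|N| by rewrite dvdn_gcd dK (dvdn_trans dP (cardSg sPN)).
  by rewrite g1 dvdn1 => /eqP p1; rewrite p1 in pr.
have := pcore_max p'K nKG; rewrite Op'1 subG1 => K1.
by rewrite K1 in ntK.
Qed.


Lemma quo_sylow_normal (gT : finGroupType) (p : nat) (G M P : {group gT}) :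
  M <| G -> p.-Sylow(G) P -> q_closed p (G / M) -> P / M <| G / M.
Proof.
move=> nMG syP [Pb [inPb nPb]].
move: inPb; rewrite inE => syPb.
have sylPb : p.-Sylow(G / M) (P / M).
  by apply: quotient_pHall => //; apply: subset_trans (pHall_sub syP) (normal_norm nMG).
have [x Gx eP] := Sylow_trans syPb sylPb.
rewrite eP; suff -> : Pb :^ x = Pb by [].
by apply/normP; apply: (subsetP (normal_norm nPb)).
Qed.

Lemma coprime_of_p' (p n : nat) : prime p -> p^'.-nat n -> coprime n p.
Proof. by move=> pr h; rewrite coprime_sym prime_coprime // -p'natE. Qed.

Lemma p'_of_coprime (p n : nat) : prime p -> coprime n p -> p^'.-nat n.
Proof. by move=> pr h; rewrite p'natE // -prime_coprime // coprime_sym. Qed.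

Lemma lift_p (gT : finGroupType) (p : nat) (G M P : {group gT}) :
  prime p -> star p G -> p.-Sylow(G) P -> ~~ (P <| G) ->
  M <| G -> p.-group M -> M :!=: 1 ->
  (q_closed p (G / M) \/ q_nilpotent p (G / M)) -> q_nilpotent p G.
Proof.
move=> pr st syP nnP nMG pM ntM [cl | [Kb [nKb copK pK]]].
  have nPb := quo_sylow_normal nMG syP cl.
  have sMP : M \subset P := subset_trans (pcore_max pM nMG) (pcore_sub_Hall syP).
  have nMP : M <| P := normalS sMP (pHall_sub syP) nMG.
  have := @cosetpre_normal _ M (P / M) (G / M).
  by rewrite (quotientGK nMP) (quotientGK nMG) nPb (negPf nnP).
set K := (coset M @*^-1 Kb)%G.
have nKG : K <| G by rewrite -(quotientGK nMG) cosetpre_normal.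
have sKbG := normal_sub nKb.
have iK : #|G : K| = #|G / M : Kb| := index_pre nMG sKbG.
have sMK : M \subset K := sub_cosetpre Kb.
have sKG := normal_sub nKG.
case eKG : (K == G :> {set gT}).
  exfalso; move/eqP: eKG => eKG.
  have eKb : Kb = G / M :> {set _} by rewrite -(cosetpreK Kb) /= -/K eKG.
  have sPG := pHall_sub syP.
  have p'Pb : p^'.-nat #|P / M|.
    apply: pnat_dvd (cardSg (quotientS M sPG)) _.
    by apply: p'_of_coprime => //; move: copK; rewrite eKb.
  have pPb : p.-nat #|P / M| by apply: quotient_pgroup; apply: pHall_pgroup syP.
  have P1 : P / M :==: 1 by rewrite trivg_card1 (pnat_1 pPb p'Pb).
  have sPM : P \subset M.
    rewrite -quotient_sub1; first by rewrite (eqP P1).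
    exact: subset_trans sPG (normal_norm nMG).
  have ePM : P :=: M.
    by apply/eqP; rewrite eqEsubset sPM (subset_trans (pcore_max pM nMG) (pcore_sub_Hall syP)).
  by move: nnP; rewrite ePM nMG.
have prK : K \proper G by rewrite properEneq eKG sKG.
have dK : p %| #|K| := dvdn_trans (p_dvd_nontriv pM ntM) (cardSg sMK).
have nilK := star_nil st prK dK.
exists ('O_p^'(K))%G; split.
- exact: char_normal_trans (pcore_char _ _) nKG.
- by apply: (coprime_of_p' pr); apply: pcore_pgroup.
- rewrite -(Lagrange_index sKG (pcore_sub _ _)) pnatM iK pK /=.
  have hallR := nilpotent_pcore_Hall p^' nilK.
  by case/and3P: hallR => _ _; rewrite pnatNK.
Qed.

Lemma lift_p' (gT : finGroupType) (p : nat) (G M P : {group gT}) :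
  prime p -> star p G -> p.-Sylow(G) P -> ~~ (P <| G) ->
  M <| G -> p^'.-group M ->
  (q_closed p (G / M) \/ q_nilpotent p (G / M)) -> q_nilpotent p G.
Proof.
move=> pr st syP nnP nMG p'M [cl | [Kb [nKb copK pK]]].
  have nPb := quo_sylow_normal nMG syP cl.
  have sPG := pHall_sub syP; have pP := pHall_pgroup syP.
  set X := (coset M @*^-1 (P / M))%G.
  have nXG : X <| G by rewrite -(quotientGK nMG) cosetpre_normal.
  have eX : X :=: M * P.
    by rewrite /= quotientK //; apply: subset_trans sPG (normal_norm nMG).
  have sPX : P \subset X by rewrite eX mulG_subr.
  case eXG : (X == G :> {set gT}).
    exists M; split => //; first by apply: (coprime_of_p' pr).
    move/eqP: eXG; rewrite eX => eG.
    rewrite -eG indexMg; apply: pnat_dvd (dvdn_indexg P M) pP.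
  have ntP : P :!=: 1.
    by apply: contra nnP => /eqP ->; apply: normal1.
  have prX : X \proper G by rewrite properEneq eXG normal_sub.
  have nilX := star_nil st prX (dvdn_trans (p_dvd_nontriv pP ntP) (cardSg sPX)).
  have eP := nilpotent_Hall_pcore nilX (pHall_subl sPX (normal_sub nXG) syP).
  have : P <| G by rewrite eP; apply: char_normal_trans (pcore_char _ _) nXG.
  by rewrite (negPf nnP).
set K := (coset M @*^-1 Kb)%G.
have nKG : K <| G by rewrite -(quotientGK nMG) cosetpre_normal.
have sKbG := normal_sub nKb.
have iK : #|G : K| = #|G / M : Kb| := index_pre nMG sKbG.
exists K; split => //; last by rewrite iK.
by rewrite card_cosetpre coprimeMl copK andbT; apply: (coprime_of_p' pr).
Qed.


Lemma pclosed_or_pnil (p : nat) : prime p ->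
  forall n (gT : finGroupType) (G : {group gT}), #|G| <= n -> star p G ->
  q_closed p G \/ q_nilpotent p G.
Proof.
move=> pr; elim=> [|n IH] gT G leG st.
  by move: (cardG_gt0 G); rewrite leqn0 in leG; rewrite (eqP leG).
have [P syP] := Sylow_exists p G.
case nP : (P <| G).
  by left; exists P; split => //; rewrite inE.
right.
case Op : ('O_p(G) == 1).
  case Op' : ('O_p^'(G) == 1).
    by exfalso; apply: (base_case pr st syP (negbT nP) (eqP Op) (eqP Op')).
  apply: (lift_p' pr st syP (negbT nP) (pcore_normal _ _) (pcore_pgroup _ _)).
  apply: IH; last exact: star_quo st (pcore_normal _ _).
  by rewrite -ltnS; apply: leq_trans leG; apply: ltn_quotient; rewrite ?Op' ?pcore_sub.
apply: (lift_p pr st syP (negbT nP) (pcore_normal _ _) (pcore_pgroup _ _)); first by rewrite Op.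
apply: IH; last exact: star_quo st (pcore_normal _ _).
by rewrite -ltnS; apply: leq_trans leG; apply: ltn_quotient; rewrite ?Op ?pcore_sub.
Qed.


Lemma pnat_q' (p q n : nat) : q != p -> p.-nat n -> q^'.-nat n.
Proof.
move=> nqp; apply: sub_in_pnat => r _; rewrite !inE => /eqP ->.
by rewrite eq_sym.
Qed.

Unset Implicit Arguments.
Theorem theorem1p9 (gT : finGroupType) (G : {group gT}) (p : nat) :
  prime p -> p %| #|G| ->
  (forall M : {group gT}, maximal M G -> nilpotent M \/ ~~ (p %| #|M|)) ->
  forall q : nat, prime q -> q %| #|G| -> q_nilpotent q G \/ q_closed q G.
Proof.
move=> pr dG hyp q prq dqG.
have st : star p G.
  move=> H prH; have [eH | [M maxM sHM]] := maximal_exists (proper_sub prH).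
    by move: prH; rewrite eH properE subxx.
  case: (hyp M maxM) => [nM | ndM]; first by left; apply: nilpotentS nM.
  by right; apply: contra ndM => dH; apply: dvdn_trans dH (cardSg sHM).
have [P syP] := Sylow_exists p G.
have sPG := pHall_sub syP; have pP := pHall_pgroup syP.
have ntP : P :!=: 1.
  rewrite -cardG_gt1 (card_Hall syP) p_part_gt1 mem_primes pr cardG_gt0 dG.
  by [].
have dP := p_dvd_nontriv pP ntP.
have copPq : q != p -> coprime #|P| q.
  by move=> nqp; apply: (coprime_of_p' prq); apply: pnat_q' nqp pP.
case nP : (P <| G).
  case qp : (q == p).
    by right; exists P; split => //; rewrite inE (eqP qp).
  have nqp : q != p by rewrite qp.
  have /splitsP[H /complP[tiPH defG]] := SchurZassenhaus_split (pHall_Hall syP) nP.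
  have sHG : H \subset G by rewrite -defG mulG_subr.
  have nPH : H \subset 'N(P) := subset_trans sHG (normal_norm nP).
  have cardG : #|G| = (#|P| * #|H|)%N by rewrite -defG TI_cardMg.
  have gen : forall Y : {group gT}, Y \subset H ->
      #|P <*> Y| = (#|P| * #|Y|)%N /\ (Y <| H -> P <*> Y <| G).
    move=> Y sYH; have nPY := subset_trans sYH nPH.
    have eXY : P <*> Y = P * Y := norm_joinEr nPY.
    split.
      rewrite eXY TI_cardMg //; apply/trivgP; rewrite -tiPH; exact: setIS.
    move=> nYH; rewrite /normal join_subG sPG (subset_trans sYH sHG) /=.
    rewrite -{1}defG mul_subG //; last by rewrite normsY ?(normal_norm nYH).
    rewrite -commg_subl; apply: subset_trans (joing_subl P Y).
    rewrite commg_subr join_subG normG nPY //.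
  have stH : star q H.
    move=> L prL; left.
    have sLH := proper_sub prL.
    have [cX _] := gen L sLH.
    have prX : P <*> L \proper G.
      rewrite properEcard join_subG sPG (subset_trans sLH sHG) /= cX cardG.
      by rewrite ltn_pmul2l ?cardG_gt0 // proper_card.
    have nilX := star_nil st prX (dvdn_trans dP (cardSg (joing_subl _ _))).
    exact: nilpotentS (joing_subr _ _) nilX.
  have [[Q [inQ nQ]] | [KH [nKH copKH qKH]]] := pclosed_or_pnil prq (leqnn _) stH.
    move: inQ; rewrite inE => syQH.
    have sQH := pHall_sub syQH.
    have [cX nX] := gen Q sQH; have nXG := nX nQ.
    have iGH : #|G : H| = #|P| by rewrite -divgS // cardG mulnK.
    have syQG : q.-Sylow(G) Q.
      rewrite /pHall (subset_trans sQH sHG) (pHall_pgroup syQH) /=.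
      rewrite -(Lagrange_index sHG sQH) pnatM iGH (pnat_q' nqp pP) /=.
      by case/and3P: syQH.
    case XG : (P <*> Q == G :> {set gT}).
      left; exists P; split => //; first exact: copPq.
      rewrite -divgS // -(eqP XG) cX mulKn //.
      exact: pHall_pgroup syQH.
    right; exists Q; split; first by rewrite inE.
    have sXG := normal_sub nXG.
    have prX : P <*> Q \proper G by rewrite properEneq XG sXG.
    have nilX := star_nil st prX (dvdn_trans dP (cardSg (joing_subl _ _))).
    have sQX : Q \subset P <*> Q := joing_subr _ _.
    rewrite (nilpotent_Hall_pcore nilX (pHall_subl sQX sXG syQG)).
    exact: char_normal_trans (pcore_char _ _) nXG.
  have sKH := normal_sub nKH.
  have [cX nX] := gen KH sKH; have nXG := nX nKH.
  left; exists (P <*> KH)%G; split => //.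
    by rewrite /= cX coprimeMl copKH copPq.
  rewrite -divgS ?normal_sub //= cX cardG divnMl // divgS //.
have nnP : ~~ (P <| G) by rewrite nP.
have [cl | [K [nKG copK pK]]] := pclosed_or_pnil pr (leqnn _) st.
  exfalso; case: cl => P0 [inP0 nP0]; move: inP0; rewrite inE => syP0.
  have [x Gx eP] := Sylow_trans syP0 syP.
  move: nnP; rewrite eP.
  suff -> : P0 :^ x = P0 by rewrite nP0.
  by apply/normP; apply: (subsetP (normal_norm nP0)).
case qp : (q == p).
  by left; rewrite (eqP qp); exists K.
have nqp : q != p by rewrite qp.
have sKG := normal_sub nKG.
have p'K : p^'.-group K := p'_of_coprime pr copK.
have defG : K ><| P = G.
  apply/(sdprod_normal_pHallP nKG syP).
  by rewrite /pHall sKG p'K pnatNK pK.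
have cardG : (#|K| * #|P|)%N = #|G| := sdprod_card defG.
have nKP : P \subset 'N(K) := subset_trans sPG (normal_norm nKG).
have copKP : coprime #|K| #|P| by apply: (pnat_coprime p'K); rewrite pnatNK.
case cKP : (K \subset 'C(P)).
  exfalso; move: nnP; rewrite /normal sPG /= -(sdprodW defG) mul_subG ?normG //.
  exact: subset_trans cKP (cent_sub P).
set C := 'C_K(P)%G.
have sCK : C \subset K := subsetIl _ _.
have gt1 : 1 < #|K : C| by rewrite indexg_gt1 subsetI subxx cKP.
set r := pdiv #|K : C|.
have prr : prime r := pdiv_prime gt1.
have drC : r %| #|K : C| := pdiv_dvd _.
have [R syR nRP] := sol_coprime_Sylow_exists r (pgroup_sol pP) nKP copKP.
have sRK := pHall_sub syR.
case RK : (R == K :> {set gT}).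
  have pK' : r.-group K by rewrite -(eqP RK); apply: pHall_pgroup syR.
  have dqK : q %| #|K|.
    by move: dqG; rewrite -cardG Gauss_dvdl // coprime_sym copPq.
  have eqr := (pgroupP pK') q prq dqK.
  right; exists K; split => //; rewrite inE /pHall sKG /=.
  move: eqr; rewrite inE => /eqP eqr; rewrite -eqr in pK' *; rewrite pK' /=.
  exact: pnat_q' nqp pK.
exfalso.
have prRK : R \proper K by rewrite properEneq RK sRK.
have eXR : R <*> P = R * P := norm_joinEr nRP.
have tiRP : R :&: P = 1.
  by apply: coprime_TIg; apply: coprime_dvdl (cardSg sRK) copKP.
have cX : #|R <*> P| = (#|R| * #|P|)%N by rewrite eXR TI_cardMg.
have prX : R <*> P \proper G.
  rewrite properEcard join_subG (subset_trans sRK sKG) sPG /= cX -cardG.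
  by rewrite ltn_pmul2r ?cardG_gt0 // proper_card.
have nilX := star_nil st prX (dvdn_trans dP (cardSg (joing_subr _ _))).
have cPR : P \subset 'C(R).
  apply: (sub_nilpotent_cent2 nilX (joing_subl _ _) (joing_subr _ _)).
  exact: coprime_dvdl (cardSg sRK) copKP.
have sRC : R \subset C by rewrite subsetI sRK centsC.
have r'KR : r^'.-nat #|K : R| by case/and3P: syR.
have : r^'.-nat #|K : C|.
  apply: pnat_dvd r'KR; rewrite -(Lagrange_index sCK sRC); exact: dvdn_mulr.
by rewrite p'natE // drC.
Qed.
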